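(* Let $X$ be an infinite-dimensional first-countable topological vector space over $\mathbb{K}$, let $M\subset X$ and let $\alpha\ge\aleph_0$ be a cardinal. Then: (i) $M$ is $\alpha$-dense-lineable if and only if $M$ is $\alpha$-infinitely $\alpha$-dense-lineable; (ii) $M$ is pointwise $\alpha$-dense-lineable if and only if $M$ is $\alpha$-infinitely pointwise $\alpha$-dense-lineable; (iii) for every cardinal $\gamma<\alpha$, $M$ is $(\gamma,\alpha)$-dense-lineable if and only if $M$ is $\alpha$-infinitely $(\gamma,\alpha)$-dense-lineable.
   Context: $M$ is $\alpha$-dense-lineable if there is a dense linear subspace $Y$ of $X$ with $\dim(Y)=\alpha$ and $Y\subset M\cup\{0\}$; it is $\alpha$-infinitely $\alpha$-dense-lineable if there is a family $\{Y_\kappa\}_{\kappa<\alpha}$ of dense $\alpha$-dimensional subspaces of $X$ contained in $M\cup\{0\}$ with $Y_{\kappa_1}\cap Y_{\kappa_2}=\{0\}$ for $\kappa_1\ne\kappa_2$. $M$ is $\gamma$-lineable if some $\gamma$-dimensional subspace lies in $M\cup\{0\}$. $M$ is pointwise $\alpha$-dense-lineable if for each $x\in M$ there is a dense $\alpha$-dimensional subspace $Y$ with $x\in Y\subset M\cup\{0\}$; it is $\alpha$-infinitely pointwise $\alpha$-dense-lineable if for each $x\in M$ there is a family $\{Y_\kappa\}_{\kappa<\alpha}$ of dense $\alpha$-dimensional subspaces with $x\in Y_\kappa\subset M\cup\{0\}$ and $Y_{\kappa_1}\cap Y_{\kappa_2}=\mathrm{span}(x)$ for $\kappa_1\ne\kappa_2$.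 For $\gamma<\alpha$, $M$ is $(\gamma,\alpha)$-dense-lineable if $M$ is $\gamma$-lineable and every $\gamma$-dimensional subspace $W\subset M\cup\{0\}$ is contained in a dense $\alpha$-dimensional subspace $Y\subset M\cup\{0\}$; it is $\alpha$-infinitely $(\gamma,\alpha)$-dense-lineable if $M$ is $\gamma$-lineable and for every such $W$ there is a family $\{Y_\kappa\}_{\kappa<\alpha}$ of dense $\alpha$-dimensional subspaces with $W\subset Y_\kappa\subset M\cup\{0\}$ and $Y_{\kappa_1}\cap Y_{\kappa_2}=W$ for $\kappa_1\ne\kappa_2$. *)

(* Defs.v *)
(* K is the scalar field (instantiated with R and
   with the complex numbers R[i] over an arbitrary realType R). *)
From mathcomp Require Import all_boot all_algebra.
From mathcomp Require Import all_classical all_reals all_analysis.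
From mathcomp Require Import complex.
Import numFieldTopology.Exports.
Import GRing.Theory.

Set Implicit Arguments.
Unset Strict Implicit.
Unset Printing Implicit Defensive.

Local Open Scope classical_set_scope.
Local Open Scope ring_scope.

Section Lineability.
Variables (K : numFieldType) (X : topologicalLmodType K).

Definition lspan (S : set X) : set X :=
  [set x | exists (n : nat) (v : 'I_n -> X) (c : 'I_n -> K),
      (forall i, S (v i)) /\ x = \sum_(i < n) c i *: v i].

Definition lsubspace (Y : set X) : Prop :=
  Y 0 /\ forall (a : K) (x y : X), Y x -> Y y -> Y (a *: x + y).

Definition lin_indep (B : set X) : Prop :=
  forall (n : nat) (v : 'I_n -> X) (c : 'I_n -> K),
    injective v -> (forall i, B (v i)) ->
    \sum_(i < n) c i *: v i = 0 -> forall i, c i = 0.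

Definition hamel_basis (Y B : set X) : Prop :=
  B `<=` Y /\ lin_indep B /\ lspan B = Y.

(* Y is a linear subspace of dimension #|A| (the cardinal is represented by
   the type A) *)
Definition has_dim (Y : set X) (A : Type) : Prop :=
  lsubspace Y /\ exists B : set X, hamel_basis Y B /\ (B #= [set: A])%card.

Definition infinite_dimensional : Prop :=
  ~ exists (n : nat) (v : 'I_n -> X), lspan (range v) = [set: X].

Definition first_countable : Prop :=
  forall x : X, exists U : nat -> set X,
    (forall n, nbhs x (U n)) /\
    (forall V, nbhs x V -> exists n, U n `<=` V).

Definition good_subspace (M : set X) (A : Type) (Y : set X) : Prop :=
  has_dim Y A /\ dense Y /\ Y `<=` M `|` [set 0].

Definition lineable (G : Type) (M : set X) : Prop :=
  exists W : set X, has_dim W G /\ W `<=` M `|` [set 0].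

Definition dense_lineable (A : Type) (M : set X) : Prop :=
  exists Y : set X, good_subspace M A Y.

(* families indexed by A (a set of cardinality alpha, playing the role of
   the ordinals kappa < alpha) *)
Definition inf_dense_lineable (A : Type) (M : set X) : Prop :=
  exists Y : A -> set X,
    (forall k, good_subspace M A (Y k)) /\
    (forall k1 k2, k1 <> k2 -> Y k1 `&` Y k2 = [set 0]).

Definition pointwise_dense_lineable (A : Type) (M : set X) : Prop :=
  forall x, M x -> exists Y : set X, good_subspace M A Y /\ Y x.

Definition inf_pointwise_dense_lineable (A : Type) (M : set X) : Prop :=
  forall x, M x -> exists Y : A -> set X,
    (forall k, good_subspace M A (Y k) /\ Y k x) /\
    (forall k1 k2, k1 <> k2 -> Y k1 `&` Y k2 = lspan [set x]).

Definition gamma_alpha_dense_lineable (G A : Type) (M : set X) : Prop :=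
  lineable G M /\
  forall W : set X, has_dim W G -> W `<=` M `|` [set 0] ->
    exists Y : set X, good_subspace M A Y /\ W `<=` Y.

Definition inf_gamma_alpha_dense_lineable (G A : Type) (M : set X) : Prop :=
  lineable G M /\
  forall W : set X, has_dim W G -> W `<=` M `|` [set 0] ->
    exists Y : A -> set X,
      (forall k, good_subspace M A (Y k) /\ W `<=` Y k) /\
      (forall k1 k2, k1 <> k2 -> Y k1 `&` Y k2 = W).

End Lineability.

Definition corollary_for (K : numFieldType) : Prop :=
  forall (X : topologicalLmodType K) (M : set X) (A : Type),
    infinite_dimensional X -> first_countable X ->
    infinite_set [set: A] ->
    (dense_lineable A M <-> inf_dense_lineable A M) /\
    (pointwise_dense_lineable A M <-> inf_pointwise_dense_lineable A M) /\
    (forall G : Type, ([set: G] #<= [set: A])%card ->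
        ~ ([set: A] #<= [set: G])%card ->
      (gamma_alpha_dense_lineable G A M <->
       inf_gamma_alpha_dense_lineable G A M)).

(* Main.v *)
Require Import Defs.
From mathcomp Require Import all_boot all_algebra.
From mathcomp Require Import all_classical all_reals all_analysis.
From mathcomp Require Import complex.

Set Implicit Arguments.
Unset Strict Implicit.
Unset Printing Implicit Defensive.

Local Open Scope classical_set_scope.
Local Open Scope card_scope.



Definition injon T U (A : set T) (B : set U) (f : T -> U) :=
  (forall x, A x -> B (f x)) /\ (forall x y, A x -> A y -> f x = f y -> x = y).

Lemma choice_fun T U (R : T -> U -> Prop) (u0 : U) :
  exists f : T -> U, forall x, (exists y, R x y) -> R x (f x).
Proof.
exists (fun x => match pselect (exists y, R x y) with
                 | left h => proj1_sig (cid h) | right _ => u0 end).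
move=> x h; case: pselect => [h'|//]; exact: proj2_sig (cid h').
Qed.

Lemma cleP T U (A : set T) (B : set U) :
  A #<= B <-> (A = set0 \/ exists f : T -> U, injon A B f).
Proof.
elim/Ppointed: U B => U B.
  rewrite card_le_emptyr; split => [/eqP ->|[->//|[f [fAB _]]]]; first by left.
  apply/eqP; rewrite -subset0 => x Ax; exact: (no (f x)).
split.
  move=> /pcard_leP /injfunPex [f fAB finj]; right; exists f; split => //.
  by move=> x y Ax Ay; apply: finj; rewrite inE.
move=> [->|[f [fAB finj]]]; first exact: card_ge0.
apply/pcard_leP/injfunPex; exists f => // x y; rewrite !inE; exact: finj.
Qed.

Lemma cle_fun T U (A : set T) (B : set U) (f : T -> U) : injon A B f -> A #<= B.
Proof. by move=> h; apply/cleP; right; exists f. Qed.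

Lemma cle_ex T U (A : set T) (B : set U) (x0 : T) : A x0 -> A #<= B ->
  exists f : T -> U, injon A B f.
Proof.
move=> Ax0 /cleP [A0|//]; by move: Ax0; rewrite A0.
Qed.

Lemma cle_exT T U (B : set U) (x0 : T) : [set: T] #<= B ->
  exists f : T -> U, injon [set: T] B f.
Proof. by move=> h; apply: (@cle_ex _ _ _ _ x0). Qed.

Lemma card_comparable T U (A : set T) (B : set U) : A #<= B \/ B #<= A.
Proof.
pose P (R : set (T * U)) := R `<=` A `*` B /\
  (forall x y y', R (x, y) -> R (x, y') -> y = y') /\
  (forall x x' y, R (x, y) -> R (x', y) -> x = x').
have [M [[MAB [Mf Mi]] Mmax]] : exists M, P M /\ forall N, M `<` N -> ~ P N.
  apply: Zorn_bigcup => F FP Ftot; split; [|split].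
  - by move=> p [R FR Rp]; have [+ _] := FP R FR; apply.
  - move=> x y y' [R1 F1 R1y] [R2 F2 R2y].
    have [R12|R21] := Ftot _ _ F1 F2.
      by have [_ [h _]] := FP R2 F2; apply: h (R12 _ R1y) R2y.
    by have [_ [h _]] := FP R1 F1; apply: h R1y (R21 _ R2y).
  - move=> x x' y [R1 F1 R1y] [R2 F2 R2y].
    have [R12|R21] := Ftot _ _ F1 F2.
      by have [_ [_ h]] := FP R2 F2; apply: h (R12 _ R1y) R2y.
    by have [_ [_ h]] := FP R1 F1; apply: h R1y (R21 _ R2y).
have [hA|hB] : (forall x, A x -> exists y, M (x, y)) \/
               (forall y, B y -> exists x, M (x, y)).
  have [h|h] := pselect (forall x, A x -> exists y, M (x, y)); first by left.
  right => y By.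
  move/existsNP: h => [x /not_implyP [Ax nx]].
  apply: contrapT => ny.
  have nx' : forall y', ~ M (x, y') by move=> y' h; apply: nx; exists y'.
  have ny' : forall x', ~ M (x', y) by move=> x' h; apply: ny; exists x'.
  apply: (Mmax (M `|` [set (x, y)])).
    split; first by move=> p Mp; left.
    by move=> h; apply: (nx' y); apply: (h (x, y)); right.
  split; [|split].
  - by move=> p [/MAB//|->].
  - move=> a b b' [Mab|[ea eb]] [Mab'|[ea' eb']]; subst => //.
    + exact: Mf Mab Mab'.
    + by exfalso; exact: nx' Mab.
    + by exfalso; exact: nx' Mab'.
  - move=> a a' b [Mab|[ea eb]] [Mab'|[ea' eb']]; subst => //.
    + exact: Mi Mab Mab'.
    + by exfalso; exact: ny' Mab.
    + by exfalso; exact: ny' Mab'.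
- left; have [->|/set0P[x0 Ax0]] := eqVneq A set0; first exact: card_ge0.
  have [y0 _] := hA x0 Ax0.
  have [f hf] := choice_fun (fun x y => M (x, y)) y0.
  apply: (@cle_fun _ _ _ _ f); split.
    by move=> x Ax; have [_ +] := MAB _ (hf x (hA x Ax)).
  move=> x x' Ax Ax' e; apply: (Mi x x' (f x)); first by apply: hf; apply: hA.
  by rewrite e; apply: hf; apply: hA.
- right; have [->|/set0P[y0 By0]] := eqVneq B set0; first exact: card_ge0.
  have [x0 _] := hB y0 By0.
  have [f hf] := choice_fun (fun y x => M (x, y)) x0.
  apply: (@cle_fun _ _ _ _ f); split.
    by move=> y By; have [+ _] := MAB _ (hf y (hB y By)).
  move=> y y' By By' e; apply: (Mf (f y) y y'); first by apply: hf; apply: hB.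
  by rewrite e; apply: hf; apply: hB.
Qed.

Lemma ceq_bij T (U : pointedType) (A : set T) (B : set U) :
  A #= B -> exists f : T -> U, [/\ (forall x, A x -> B (f x)),
    (forall x y, A x -> A y -> f x = f y -> x = y) &
    (forall y, B y -> exists2 x, A x & f x = y)].
Proof.
move=> /pcard_eqP /bijPex [f [ff fi fs]]; exists f; split.
- by move=> x Ax; apply: ff.
- by move=> x y Ax Ay; apply: fi; rewrite inE.
- by move=> y By; have [x Ax <-] := fs y By; exists x.
Qed.

Section Hessenberg.
Variable (T : pointedType).
Hypothesis Tinf : infinite_set [set: T].

Let rng (R : set ((T * T) * T)) (z : T) := exists p, R (p, z).
Let good (R : set ((T * T) * T)) :=
  [/\ (forall p z z', R (p, z) -> R (p, z') -> z = z'),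
      (forall p p' z, R (p, z) -> R (p', z) -> p = p') &
      (forall x y, (exists z, R ((x, y), z)) <-> rng R x /\ rng R y)].

Lemma rng_sub (R R' : set ((T * T) * T)) : R `<=` R' -> rng R `<=` rng R'.
Proof. by move=> RR' z [p Rp]; exists p; apply: RR'. Qed.

Theorem hessenberg : [set: T * T] #<= [set: T].
Proof.
have [g [_ ginj]] : exists g : nat -> T, injon [set: nat] [set: T] g.
  by apply: (@cle_exT _ _ _ 0%N); apply/infiniteP.
have [pi [_ piinj pisurj]] := ceq_bij card_nat2.
pose R0 : set ((T * T) * T) := fun q => exists i j, q = ((g i, g j), g (pi (i, j))).
have rngR0 : forall z, rng R0 z <-> exists k, z = g k.
  move=> z; split; first by move=> [p [i [j [_ ->]]]]; exists (pi (i, j)).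
  move=> [k ->]; have [[i j] _ <-] := pisurj k I; exists (g i, g j); by exists i, j.
have goodR0 : good R0.
  split.
  - move=> p z z' [i [j [Ep Ez]]] [i' [j' [Ep' Ez']]]; subst.
    by case: Ep' => /ginj -> // /ginj -> //.
  - move=> p p' z [i [j [Ep Ez]]] [i' [j' [Ep' Ez']]]; subst.
    by move: Ez' => /(ginj _ _ I I) /(piinj _ _ I I) [-> ->].
  - move=> x y; split.
      move=> [z [i [j [[Ex Ey] _]]]]; subst.
      by split; apply/rngR0; [exists i|exists j].
    move=> [/rngR0 [i ->] /rngR0 [j ->]]; exists (g (pi (i, j))); by exists i, j.
pose P (R : set ((T * T) * T)) := R = set0 \/ (R0 `<=` R /\ good R).
have [M [PM Mmax]] : exists M, P M /\ forall N, M `<` N -> ~ P N.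
  apply: Zorn_bigcup => F FP Ftot.
  have [allE|] := pselect (forall R, F R -> R = set0).
    left; apply/seteqP; split => // q [R FR]; by rewrite (allE R FR).
  move=> /existsNP [R1 /not_implyP [FR1 R1n0]].
  have good_of R : F R -> R <> set0 -> R0 `<=` R /\ good R.
    by move=> FR Rn0; case: (FP R FR).
  have [R01 _] := good_of R1 FR1 R1n0.
  have nz R p z : F R -> R (p, z) -> R <> set0.
    by move=> _ Rp R0e; rewrite R0e in Rp.
  right; split; first by move=> q R0q; exists R1 => //; apply: R01.
  split.
  - move=> p z z' [Ra Fa Rap] [Rb Fb Rbp].
    have [ab|ba] := Ftot _ _ Fa Fb.
      have [_ [h _ _]] := good_of Rb Fb (nz _ _ _ Fb Rbp).
      by apply: h (ab _ Rap) Rbp.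
    have [_ [h _ _]] := good_of Ra Fa (nz _ _ _ Fa Rap).
    by apply: h Rap (ba _ Rbp).
  - move=> p p' z [Ra Fa Rap] [Rb Fb Rbp].
    have [ab|ba] := Ftot _ _ Fa Fb.
      have [_ [_ h _]] := good_of Rb Fb (nz _ _ _ Fb Rbp).
      by apply: h (ab _ Rap) Rbp.
    have [_ [_ h _]] := good_of Ra Fa (nz _ _ _ Fa Rap).
    by apply: h Rap (ba _ Rbp).
  - move=> x y; split.
      move=> [z [R FR Rxy]].
      have [_ [_ _ h]] := good_of R FR (nz _ _ _ FR Rxy).
      have [hx hy] := (h x y).1 (ex_intro _ z Rxy).
      split; apply: (rng_sub (R := R)) => //; by move=> q Rq; exists R.
    move=> [[px [Ra Fa Rax]] [py [Rb Fb Rby]]].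
    have [ab|ba] := Ftot _ _ Fa Fb.
      have [_ [_ _ h]] := good_of Rb Fb (nz _ _ _ Fb Rby).
      have [z Rz] := (h x y).2 (conj (ex_intro _ px (ab _ Rax)) (ex_intro _ py Rby)).
      by exists z, Rb.
    have [_ [_ _ h]] := good_of Ra Fa (nz _ _ _ Fa Rax).
    have [z Rz] := (h x y).2 (conj (ex_intro _ px Rax) (ex_intro _ py (ba _ Rby))).
    by exists z, Ra.
have [R0M [Mf Mi Msq]] : R0 `<=` M /\ good M.
  case: PM => // M0; exfalso; apply: (Mmax R0); last by right; split.
  rewrite M0; split => // h.
  by have := h ((g 0, g 0), g (pi (0, 0)))%N; apply; exists 0%N, 0%N.
pose S := rng M.
have gS k : S (g k).
  by apply: (rng_sub R0M); apply/rngR0; exists k.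
have [m hm] := choice_fun (fun (p : T * T) z => M (p, z)) point.
have mM x y : S x -> S y -> M ((x, y), m (x, y)).
  by move=> Sx Sy; apply: hm; apply/Msq.
have mS x y : S x -> S y -> S (m (x, y)).
  by move=> Sx Sy; exists (x, y); apply: mM.
have minj x y x' y' : S x -> S y -> S x' -> S y' -> m (x, y) = m (x', y') ->
    x = x' /\ y = y'.
  move=> Sx Sy Sx' Sy' e.
  have h1 := mM _ _ Sx Sy; rewrite e in h1.
  by have := Mi _ _ _ h1 (mM _ _ Sx' Sy'); case=> -> ->.
have s12 : g 0%N <> g 1%N by move=> /(ginj _ _ I I).
suff TS : [set: T] #<= S.
  have [f [fS finj]] := @cle_exT _ _ _ point TS.
  apply: (@cle_fun _ _ _ _ (fun p => m (f p.1, f p.2))); split => // -[x y] [x' y'] _ _ /=.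
  move=> e; have [e1 e2] := minj _ _ _ _ (fS x I) (fS y I) (fS x' I) (fS y' I) e.
  by rewrite (finj _ _ I I e1) (finj _ _ I I e2).
have [CS|SC] := card_comparable (~` S) S.
  have [Sfull|/set0P [c0 Sc0]] := eqVneq (~` S) set0.
    apply: (@cle_fun _ _ _ _ id); split => // x _; apply: contrapT => nSx.
    by have : (~` S) x by []; rewrite Sfull.
  have [h [hS hinj]] := cle_ex Sc0 CS.
  apply: (@cle_fun _ _ _ _ (fun x => if pselect (S x) then m (x, g 0%N)
                                    else m (h x, g 1%N))); split.
    by move=> x _; case: pselect => Sx; apply: mS => //; apply: hS.
  move=> x y _ _; case: pselect => Sx; case: pselect => Sy e.
  - by have [] := minj _ _ _ _ Sx (gS 0%N) Sy (gS 0%N) e.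
  - by have [_ /s12] := minj _ _ _ _ Sx (gS 0%N) (hS y Sy) (gS 1%N) e.
  - by have [_ /esym/s12] := minj _ _ _ _ (hS x Sx) (gS 1%N) Sy (gS 0%N) e.
  - have [e1 _] := minj _ _ _ _ (hS x Sx) (gS 1%N) (hS y Sy) (gS 1%N) e.
    exact: hinj e1.
have [h [hS hinj]] := cle_ex (gS 0%N) SC.
pose T' := h @` S.
have T'nS t : T' t -> ~ S t by move=> [s Ss <-]; apply: hS.
have [hinv hh] := choice_fun (fun t s => S s /\ h s = t) point.
have hinvS t : T' t -> S (hinv t) /\ h (hinv t) = t.
  by move=> [s Ss <-]; apply: hh; exists s.
pose D : set (T * T) := fun p => [/\ S p.1 \/ T' p.1, S p.2 \/ T' p.2 & ~ (S p.1 /\ S p.2)].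
pose pre a := if pselect (S a) then a else hinv a.
pose tag a := if pselect (S a) then g 0%N else g 1%N.
have preS a : S a \/ T' a -> S (pre a).
  by rewrite /pre; case: pselect => // Sa [//|/hinvS[]].
have tagS a : S (tag a).
  by rewrite /tag; case: (pselect (S a)) => ?; apply: gS.
have pre_inj a a' : S a \/ T' a -> S a' \/ T' a' -> tag a = tag a' ->
    pre a = pre a' -> a = a'.
  rewrite /pre /tag; case: pselect => Sa; case: pselect => Sa' da da' et ep //.
  all: try by case: s12.
  move: da da' ep => [//|Ta] [//|Ta'] /= ep.
  by rewrite -(hinvS _ Ta).2 -(hinvS _ Ta').2 ep.
have DT : D #<= T'.
  apply: (@cle_fun _ _ _ _ (fun p => h (m (m (pre p.1, pre p.2), m (tag p.1, tag p.2))))).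
  split.
    move=> p [d1 d2 _]; exists (m (m (pre p.1, pre p.2), m (tag p.1, tag p.2))) => //.
    apply: (mS); apply: (mS). exact: preS. exact: preS. exact: tagS. exact: tagS.
  move=> [a b] [a' b'] [da db _] [da' db' _] /= e.
  have := hinj _ _ (mS _ _ (mS _ _ (preS _ da) (preS _ db)) (mS _ _ (tagS a) (tagS b)))
                   (mS _ _ (mS _ _ (preS _ da') (preS _ db')) (mS _ _ (tagS a') (tagS b'))) e.
  move=> e1.
  have [e2 e3] := minj _ _ _ _ (mS _ _ (preS _ da) (preS _ db)) (mS _ _ (tagS a) (tagS b))
                   (mS _ _ (preS _ da') (preS _ db')) (mS _ _ (tagS a') (tagS b')) e1.
  have [e4 e5] := minj _ _ _ _ (preS _ da) (preS _ db) (preS _ da') (preS _ db') e2.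
  have [e6 e7] := minj _ _ _ _ (tagS a) (tagS b) (tagS a') (tagS b') e3.
  by rewrite (pre_inj a a' da da' e6 e4) (pre_inj b b' db db' e7 e5).
have TD : T' #<= D.
  apply: (@cle_fun T (T * T)%type T' D (fun t => (t, t))); split.
    move=> t Tt; split; [right; exact: Tt|right; exact: Tt|].
    by move=> [St _]; exact: T'nS Tt St.
  by move=> t t' _ _ [].
have [k [kD kinj ksurj]] := ceq_bij (Cantor_Bernstein DT TD).
pose M' : set ((T * T) * T) := fun q => M q \/ (D q.1 /\ q.2 = k q.1).
have rngM' w : rng M' w <-> S w \/ T' w.
  split.
    by move=> [p [Mp|[Dp /= ->]]]; [left; exists p | right; exact: kD].
  move=> [Sw|Tw]; first by have [p Mp] := Sw; exists p; left.
  by have [p Dp <-] := ksurj w Tw; exists p; right.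
have MS x y z : M ((x, y), z) -> S x /\ S y.
  by move=> Mz; apply: (Msq x y).1; exists z.
exfalso; apply: (Mmax M').
  split; first by move=> q Mq; left.
  move=> sub.
  have Tt : T' (h (g 0%N)) by exists (g 0%N).
  have Dtt : D (h (g 0%N), h (g 0%N)).
    split; [by right|by right|].
    by move=> [St _]; exact: T'nS Tt St.
  have := sub ((h (g 0%N), h (g 0%N)), k (h (g 0%N), h (g 0%N))).
  move=> /(_ (or_intror (conj Dtt erefl))) /MS [St _].
  exact: T'nS Tt St.
right; split; first by move=> q /R0M; left.
split.
- move=> [x y] z z' [Mz|[Dp /= ->]] [Mz'|[Dp' /= ->]] //.
  + exact: Mf Mz Mz'.
  + by exfalso; case: Dp' => _ _; apply; apply: MS Mz.
  + by exfalso; case: Dp => _ _; apply; apply: MS Mz'.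
- move=> p p' z [Mz|[Dp /= ez]] [Mz'|[Dp' /= ez']].
  + exact: Mi Mz Mz'.
  + by exfalso; apply: (T'nS z); [rewrite ez'; exact: kD | exists p].
  + by exfalso; apply: (T'nS z); [rewrite ez; exact: kD | exists p'].
  + by apply: kinj => //; rewrite -ez -ez'.
- move=> x y; rewrite !rngM'; split.
    move=> [z [Mz|[[dx dy _] _]]] //.
    by have [Sx Sy] := MS _ _ _ Mz; split; left.
  move=> [dx dy]; have [[Sx Sy]|nS] := pselect (S x /\ S y).
    by have [z Mz] := (Msq x y).2 (conj Sx Sy); exists z; left.
  by exists (k (x, y)); right; split.
Qed.
End Hessenberg.

Lemma ceq_bij_d T U (u0 : U) (A : set T) (B : set U) :
  A #= B -> exists f : T -> U, [/\ (forall x, A x -> B (f x)),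
    (forall x y, A x -> A y -> f x = f y -> x = y) &
    (forall y, B y -> exists2 x, A x & f x = y)].
Proof.
elim/Ppointed: U u0 B => U u0 B; first by case: (no u0).
exact: ceq_bij.
Qed.

Lemma nat_fun (T : Type) : infinite_set [set: T] -> exists nu : nat -> T, injective nu.
Proof.
move=> /infiniteP h; have [nu [_ nuinj]] := @cle_exT _ _ _ 0%N h.
by exists nu => x y /(nuinj _ _ I I).
Qed.

Lemma hess_fun (T : Type) : infinite_set [set: T] -> exists rho : T * T -> T, injective rho.
Proof.
elim/Ppointed: T => T Tinf.
  by exfalso; apply: Tinf; rewrite empty_eq0; exact: finite_set0.
have [rho [_ rinj]] := @cle_exT _ _ _ (point, point) (hessenberg Tinf).
by exists rho => x y /(rinj _ _ I I).
Qed.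


Import numFieldTopology.Exports.
Import GRing.Theory Num.Theory.
Local Open Scope ring_scope.



Lemma big_pred1_seqE (R : Type) (idx : R) (op : Monoid.com_law idx)
  (I : eqType) (r : seq I) (i : I) (F : I -> R) :
  uniq r -> i \in r -> \big[op/idx]_(j <- r | j == i) F j = F i.
Proof.
move=> ur ir; rewrite -big_filter.
have -> : [seq j <- r | j == i] = [:: i].
  by rewrite -(filter_pred1_uniq ur ir); apply: eq_filter => j /=.
by rewrite big_seq1.
Qed.

Lemma big_partition_undup (R : Type) (idx : R) (op : Monoid.com_law idx)
  (T I : eqType) (r : seq T) (f : T -> I) (F : T -> R) :
  \big[op/idx]_(x <- r) F x =
  \big[op/idx]_(i <- undup (map f r)) \big[op/idx]_(x <- r | f x == i) F x.
Proof.
symmetry; rewrite (exchange_big_dep xpredT) //=.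
apply: eq_big_seq => x xr.
rewrite (eq_bigl (fun i => i == f x)); last by move=> i; rewrite eq_sym.
rewrite big_pred1_seqE //; first exact: undup_uniq.
by rewrite mem_undup; apply: map_f.
Qed.

Section LinAlg.
Variables (K : numFieldType) (X : topologicalLmodType K).
Implicit Types (S T Z : set X) (s t : seq (X * K)).

Definition combF (F : X -> X) s : X := \sum_(p <- s) p.2 *: F p.1.
Definition comb s : X := \sum_(p <- s) p.2 *: p.1.
Definition csum s (c : X) : K := \sum_(p <- s | p.1 == c) p.2.
Definition onS S s := forall p, p \in s -> S p.1.
Definition sc (a : K) s := [seq (p.1, a * p.2) | p <- s].

Lemma comb_cat s t : comb (s ++ t) = comb s + comb t.
Proof. by rewrite /comb big_cat. Qed.
Lemma combF_cat F s t : combF F (s ++ t) = combF F s + combF F t.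
Proof. by rewrite /combF big_cat. Qed.
Lemma csum_cat s t c : csum (s ++ t) c = csum s c + csum t c.
Proof. by rewrite /csum big_cat. Qed.
Lemma comb_sc a s : comb (sc a s) = a *: comb s.
Proof.
rewrite /comb /sc big_map scaler_sumr; apply: eq_bigr => p _.
by rewrite scalerA.
Qed.
Lemma combF_sc F a s : combF F (sc a s) = a *: combF F s.
Proof.
rewrite /combF /sc big_map scaler_sumr; apply: eq_bigr => p _.
by rewrite scalerA.
Qed.
Lemma csum_sc a s c : csum (sc a s) c = a * csum s c.
Proof. by rewrite /csum /sc big_map mulr_sumr. Qed.
Lemma onS_cat S s t : onS S s -> onS S t -> onS S (s ++ t).
Proof. by move=> hs ht p; rewrite mem_cat => /orP[/hs|/ht]. Qed.
Lemma onS_sc S a s : onS S s -> onS S (sc a s).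
Proof. by move=> hs p; rewrite /sc => /mapP[q qs ->] /=; exact: hs. Qed.
Lemma onS_sub S T s : S `<=` T -> onS S s -> onS T s.
Proof. by move=> ST hs p ps; apply/ST/hs. Qed.

Lemma combF_group F s :
  combF F s = \sum_(c <- undup (map fst s)) csum s c *: F c.
Proof.
rewrite /combF (big_partition_undup _ _ fst); apply: eq_bigr => c _.
rewrite /csum scaler_suml; apply: eq_bigr => p /eqP pc.
by rewrite pc.
Qed.

Lemma comb_group s : comb s = \sum_(c <- undup (map fst s)) csum s c *: c.
Proof. exact: (combF_group id). Qed.

Lemma csum_notin s c : c \notin map fst s -> csum s c = 0.
Proof.
move=> cn; rewrite /csum big1_seq // => p /andP[/eqP pc ps].
by move: cn; rewrite -pc map_f.
Qed.

Lemma lspan_comb S y : lspan S y <-> exists s, onS S s /\ y = comb s.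
Proof.
split.
  move=> [n [v [c [Sv ->]]]].
  exists [seq (v i, c i) | i <- enum 'I_n]; split.
    by move=> p /mapP[i _ ->]; exact: Sv.
  by rewrite /comb big_map big_enum.
move=> [s [Ss ->]].
exists (size s), (fun i => (nth (0, 0) s i).1), (fun i => (nth (0, 0) s i).2).
split; first by move=> i; apply/Ss/mem_nth.
by rewrite /comb (big_nth (0, 0)) big_mkord.
Qed.

Lemma indep_csum S : lin_indep S ->
  forall s, onS S s -> comb s = 0 -> forall c, csum s c = 0.
Proof.
move=> hS s Ss s0 c.
set u := undup (map fst s).
have uu : uniq u by exact: undup_uniq.
have [cu|cnu] := boolP (c \in u); last first.
  by apply: csum_notin; rewrite -mem_undup.
have := hS (size u) (fun i => nth 0 u i) (fun i => csum s (nth 0 u i)).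
have inj : injective (fun i : 'I_(size u) => nth 0 u i).
  by move=> i j /eqP; rewrite nth_uniq // => /eqP /val_inj.
have Su : forall i : 'I_(size u), S (nth 0 u i).
  move=> i; have : nth 0 u i \in u by apply: mem_nth.
  by rewrite mem_undup => /mapP[p ps ->]; exact: Ss.
move=> /(_ inj Su).
have -> : \sum_(i < size u) csum s (nth 0 u i) *: nth 0 u i = comb s.
  by rewrite comb_group (big_nth 0) big_mkord.
have ci : (index c u < size u)%N by rewrite index_mem.
move=> /(_ s0 (Ordinal ci)) /=.
by rewrite nth_index.
Qed.

Lemma lsubD Z x y : lsubspace Z -> Z x -> Z y -> Z (x + y).
Proof. by move=> [_ h] zx zy; have := h 1 x y zx zy; rewrite scale1r. Qed.
Lemma lsubZ Z a x : lsubspace Z -> Z x -> Z (a *: x).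
Proof. by move=> [z0 h] zx; have := h a x 0 zx z0; rewrite addr0. Qed.
Lemma lsubN Z x : lsubspace Z -> Z x -> Z (- x).
Proof. by move=> hZ zx; rewrite -scaleN1r; exact: lsubZ. Qed.
Lemma lsubB Z x y : lsubspace Z -> Z x -> Z y -> Z (x - y).
Proof. by move=> hZ zx zy; apply: lsubD => //; exact: lsubN. Qed.
Lemma lsub0 Z : lsubspace Z -> Z 0.
Proof. by case. Qed.

Lemma lsub_comb Z s : lsubspace Z -> onS Z s -> Z (comb s).
Proof.
move=> hZ; elim: s => [|p s IH] hs; first by rewrite /comb big_nil; exact: lsub0.
rewrite /comb big_cons; apply: lsubD => //.
  by apply: lsubZ => //; apply: hs; rewrite inE eqxx.
by apply: IH => q qs; apply: hs; rewrite inE qs orbT.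
Qed.

Lemma lspan_sub Z S : lsubspace Z -> S `<=` Z -> lspan S `<=` Z.
Proof.
move=> hZ SZ y /lspan_comb [s [Ss ->]]; apply: lsub_comb => //.
exact: onS_sub Ss.
Qed.

Lemma lspan_lsub S : lsubspace (lspan S).
Proof.
split.
  by apply/lspan_comb; exists [::]; split => //; rewrite /comb big_nil.
move=> a x y /lspan_comb[s [Ss ->]] /lspan_comb[t [St ->]].
apply/lspan_comb; exists (sc a s ++ t); split.
  by apply: onS_cat => //; exact: onS_sc.
by rewrite comb_cat comb_sc.
Qed.

Lemma lspan_in S : S `<=` lspan S.
Proof.
move=> x Sx; apply/lspan_comb; exists [:: (x, 1)]; split.
  by move=> p; rewrite inE => /eqP ->.
by rewrite /comb big_seq1 scale1r.
Qed.

Lemma lspan_mono S T : S `<=` T -> lspan S `<=` lspan T.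
Proof.
move=> ST; apply: lspan_sub; first exact: lspan_lsub.
by move=> x /ST; apply: lspan_in.
Qed.

End LinAlg.

Lemma seq_argmax (T : eqType) (r : seq T) (P : pred T) (f : T -> nat) :
  has P r -> exists2 x, (x \in r) && P x & forall y, y \in r -> P y -> (f y <= f x)%N.
Proof.
elim: r => [|a r IH] //= /orP[Pa|hr].
  have [hr|nhr] := boolP (has P r).
    have [x /andP[xr Px] mx] := IH hr.
    have [le|lt] := leqP (f a) (f x).
      exists x; first by rewrite inE xr orbT Px.
      by move=> y; rewrite inE => /orP[/eqP ->|/mx]//.
    exists a; first by rewrite inE eqxx Pa.
    move=> y; rewrite inE => /orP[/eqP ->//|yr Py].
    by apply: leq_trans (mx y yr Py) (ltnW lt).
  exists a; first by rewrite inE eqxx Pa.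
  move=> y; rewrite inE => /orP[/eqP ->//|yr Py].
  by move/hasPn: nhr => /(_ y yr); rewrite Py.
have [x /andP[xr Px] mx] := IH hr.
have [PA|nPa] := boolP (P a).
  have [le|lt] := leqP (f a) (f x).
    exists x; first by rewrite inE xr orbT Px.
    by move=> y; rewrite inE => /orP[/eqP ->|/mx]//.
  exists a; first by rewrite inE eqxx PA.
  move=> y; rewrite inE => /orP[/eqP ->//|yr Py].
  by apply: leq_trans (mx y yr Py) (ltnW lt).
exists x; first by rewrite inE xr orbT Px.
move=> y; rewrite inE => /orP[/eqP ->|/mx]//.
by rewrite (negbTE nPa).
Qed.

Section Master.
Variables (K : numFieldType) (X : topologicalLmodType K).
Variables (B B0 P : set X) (beta : X -> X) (lv : X -> nat) (tau : X -> K).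
Hypotheses (hB : lin_indep B) (PB : P `<=` B) (B0B : B0 `<=` B)
  (PB0 : forall c, P c -> ~ B0 c) (betaB : forall c, P c -> B (beta c))
  (lvb : forall c, P c -> (lv (beta c) < lv c)%N)
  (tau0 : forall c, P c -> tau c != 0).

Definition uvec (c : X) : X := beta c + tau c *: c.

Lemma master s t : onS P s -> onS B0 t -> comb t + combF uvec s = 0 ->
  forall c, csum s c = 0.
Proof.
move=> Ps Bt e0 c0; apply/eqP; apply: contraT => nz.
set U := undup (map fst s).
have hU : has (fun c => csum s c != 0) U.
  apply/hasP; exists c0 => //; rewrite mem_undup.
  by apply: contraNT nz => /csum_notin ->.
have [c /andP[cU cnz] cmax] := seq_argmax lv hU.
have Pc : P c.
  by move: cU; rewrite mem_undup => /mapP[p ps ->]; apply: Ps.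
pose T := t ++ [seq (beta p.1, p.2) | p <- s] ++ [seq (p.1, tau p.1 * p.2) | p <- s].
have BT : onS B T.
  apply: onS_cat; first exact: onS_sub Bt.
  apply: onS_cat => p /mapP[q qs ->] /=.
    by apply: betaB; apply: Ps.
  by apply: PB; apply: Ps.
have cT : comb T = 0.
  rewrite -e0 /T !comb_cat; congr (_ + _).
  rewrite /comb /combF !big_map -big_split /=; apply: eq_bigr => p _.
  by rewrite /uvec scalerDr scalerA mulrC.
have := indep_csum hB BT cT c.
rewrite /T !csum_cat.
have -> : csum t c = 0.
  apply: csum_notin; apply/negP => /mapP[p pt pc].
  by apply: (PB0 Pc); rewrite pc; apply: Bt.
have -> : csum [seq (beta p.1, p.2) | p <- s] c = 0.
  rewrite /csum big_map /= big_mkcond /=.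
  rewrite (big_partition_undup _ _ fst) -/U; apply: big1_seq => d /andP[_ dU].
  have Pd : P d.
    by move: dU; rewrite mem_undup => /mapP[p ps ->]; apply: Ps.
  have [bdc|nbdc] := eqVneq (beta d) c; last first.
    by rewrite big1 // => p /eqP ->; rewrite (negbTE nbdc).
  have -> : \sum_(i <- s | i.1 == d) (if beta i.1 == c then i.2 else 0) = csum s d.
    by rewrite /csum; apply: eq_bigr => p /eqP ->; rewrite bdc eqxx.
  apply/eqP; apply: contraT => dnz.
  have := cmax d dU dnz; have := lvb Pd; rewrite bdc => lt1 le1.
  by move: (leq_trans lt1 le1); rewrite ltnn.
have -> : csum [seq (p.1, tau p.1 * p.2) | p <- s] c = tau c * csum s c.
  rewrite /csum big_map /= mulr_sumr; apply: eq_bigr => p /eqP ->; by [].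
rewrite add0r add0r => /eqP; rewrite mulf_eq0 (negbTE (tau0 Pc)) /=.
by rewrite (negbTE cnz).
Qed.

Lemma master_comb s t : onS P s -> onS B0 t -> comb t + combF uvec s = 0 ->
  combF uvec s = 0 /\ comb t = 0.
Proof.
move=> Ps Bt e0.
have h : combF uvec s = 0.
  rewrite combF_group big1 // => c _; by rewrite (master Ps Bt e0) scale0r.
by split => //; move: e0; rewrite h addr0.
Qed.

End Master.



Section Topo.
Variables (K : numFieldType) (X : topologicalLmodType K).
Implicit Types (S Z : set X).

Lemma closure_lsub Z : lsubspace Z -> lsubspace (closure Z).
Proof.
move=> hZ; split; first exact: subset_closure (lsub0 hZ).
move=> a x y cx cy V Vn.
have [[B1 B2] /= [nB1 nB2] BV] := @add_continuous X (a *: x, y) V Vn.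
have [[C1 C2] /= [nC1 nC2] CB] := @scale_continuous K X (a, x) B1 nB1.
have [u [Zu C2u]] := cx _ nC2.
have [v [Zv B2v]] := cy _ nB2.
exists (a *: u + v); split.
  by have [_ h] := hZ; apply: h.
have : B1 (a *: u) by apply: (CB (a, u)); split => //=; exact: nbhs_singleton.
by move=> B1u; apply: (BV (a *: u, v)).
Qed.

Lemma dense_of_closure (Y B Z : set X) : dense Y -> Y `<=` lspan B ->
  lsubspace Z -> B `<=` closure Z -> dense Z.
Proof.
move=> dY YB hZ BZ O O0 oO.
have [y [Oy Yy]] := dY O O0 oO.
have : closure Z y.
  apply: (lspan_sub (closure_lsub hZ) BZ); exact: YB.
move=> /(_ O) []; first by apply: open_nbhs_nbhs; split.
by move=> z [Zz Oz]; exists z.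
Qed.

Lemma small_mult (U : set X) (c : X) : nbhs 0 U -> exists t : K, t != 0 /\ U (t *: c).
Proof.
move=> U0.
have := @scale_continuous K X (0, c) U; rewrite /= scale0r => /(_ U0).
move=> -[[C1 C2]] /= [nC1 nC2] CU.
move: nC1 => /nbhs_ballP [e /= e0 eC1].
exists (e / 2); split.
  by apply: lt0r_neq0; rewrite divr_gt0.
apply: (CU (e / 2, c)); split => /=; last exact: nbhs_singleton.
apply: eC1; rewrite /ball /= sub0r normrN gtr0_norm ?divr_gt0 ?ltr0n //.
by rewrite ltr_pdivrMr ?ltr0n // ltr_pMr // ltr1n.
Qed.

Lemma closure_seq (Z : set X) (b : X) (U : nat -> set X) (d : nat -> X) :
  (forall V, nbhs 0 V -> exists n, U n `<=` V) ->
  (forall n, U n (d n)) -> (forall n, Z (b + d n)) -> closure Z b.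
Proof.
move=> Ub Ud Zd V Vb.
have := @add_continuous X (b, 0) V; rewrite /= addr0 => /(_ Vb).
move=> -[[B1 B2]] /= [nB1 nB2] BV.
have [n Un] := Ub _ nB2.
exists (b + d n); split => //.
apply: (BV (b, d n)); split => /=; first exact: nbhs_singleton.
exact: Un.
Qed.

End Topo.



Section Core.
Variables (K : numFieldType) (X : topologicalLmodType K).

Lemma combF_comb (F : X -> X) (s : seq (X * K)) :
  combF F s = comb [seq (F p.1, p.2) | p <- s].
Proof. by rewrite /combF /comb big_map. Qed.

Lemma combF_nil (F : X -> X) : combF F [::] = 0.
Proof. by rewrite /combF big_nil. Qed.

Lemma combF1 (F : X -> X) c : combF F [:: (c, 1)] = F c.
Proof. by rewrite /combF big_seq1 scale1r. Qed.

Lemma csum_mf n (P : pred 'I_n) (f : 'I_n -> X) (c : 'I_n -> K) x :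
  csum [seq (f j, c j) | j <- enum 'I_n & P j] x = \sum_(j | P j && (f j == x)) c j.
Proof. by rewrite /csum big_map big_filter_cond /= big_enum_cond. Qed.

Lemma comb_mf n (P : pred 'I_n) (f : 'I_n -> X) (c : 'I_n -> K) :
  comb [seq (f j, c j) | j <- enum 'I_n & P j] = \sum_(j | P j) c j *: f j.
Proof. by rewrite /comb big_map big_filter /= big_enum_cond. Qed.

Lemma combF_mf (F : X -> X) n (P : pred 'I_n) (f : 'I_n -> X) (c : 'I_n -> K) :
  combF F [seq (f j, c j) | j <- enum 'I_n & P j] = \sum_(j | P j) c j *: F (f j).
Proof. by rewrite /combF big_map big_filter /= big_enum_cond. Qed.

Variables (A : Type) (Ainf : infinite_set [set: A]).
Variables (U : nat -> set X) (U0 : forall n, nbhs 0 (U n))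
  (Ub : forall V, nbhs 0 V -> exists n, U n `<=` V).
Variables (Y B W BW B0 : set X).
Hypotheses (hY : lsubspace Y) (hB : hamel_basis Y B) (BA : (B #= [set: A])%card)
  (dY : dense Y) (hBW : lin_indep BW) (WBW : W = lspan BW)
  (BWA : (BW #<= [set: A])%card) (WY : W `<=` Y) (B0B : B0 `<=` B)
  (WB0 : W `<=` lspan B0) (nAB0 : ~ ([set: A] #<= B0)%card).

Theorem core : exists Z : A -> set X,
  (forall k, [/\ has_dim (Z k) A, dense (Z k), W `<=` Z k & Z k `<=` Y]) /\
  (forall k1 k2, k1 <> k2 -> Z k1 `&` Z k2 = W).
Proof.
have [BY [Bind BYe]] := hB.
have [rho rinj] := hess_fun Ainf.
have [nu nuinj] := nat_fun Ainf.
pose a0 := nu 0%N.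
have [b0 [b0B b0inj b0surj]] := ceq_bij_d 0 (card_esym BA).
(* a fresh column *)
have [iota [iB iB0 iinj]] : exists iota : A -> X,
    [/\ forall a, B (iota a), forall a, ~ B0 (iota a) & injective iota].
  have [[a hcol]|] := pselect (exists a, forall a', ~ B0 (b0 (rho (a, a')))).
    exists (fun a' => b0 (rho (a, a'))); split => //.
      by move=> a'; apply: b0B.
    by move=> x y /(b0inj _ _ I I) /rinj [].
  move=> /forallNP hall; exfalso; apply: nAB0.
  have hsel : forall a, exists a', B0 (b0 (rho (a, a'))).
    by move=> a; have := hall a => /existsNP [a' /contrapT h]; exists a'.
  have [sel hs] := choice_fun (fun a a' => B0 (b0 (rho (a, a')))) a0.
  apply: (@cle_fun _ _ _ _ (fun a => b0 (rho (a, sel a)))); split.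
    by move=> a _; apply: hs; apply: hsel.
  by move=> x y _ _ /(b0inj _ _ I I) /rinj [].
pose enc (q : A * A * nat * nat) : A :=
  rho (rho (q.1.1.1, q.1.1.2), rho (nu q.1.2, nu q.2)).
have encinj : injective enc.
  move=> q q'; case: q => [[[a k] n] m]; case: q' => [[[a' k'] n'] m'].
  rewrite /enc /= => /rinj [] /rinj [e1 e2] /rinj [/nuinj e3 /nuinj e4].
  by subst.
have [dec hdec] := choice_fun (fun c q => iota (enc q) = c) (a0, a0, 0%N, 0%N).
have dec_enc q : dec (iota (enc q)) = q.
  by apply: encinj; apply: iinj; apply: hdec; exists q.
pose lv (c : X) : nat := if pselect (exists q, iota (enc q) = c) then (dec c).2.+1 else 0%N.
have lv_enc q : lv (iota (enc q)) = q.2.+1.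
  rewrite /lv; destruct pselect as [p|h]; first by rewrite /= dec_enc.
  by exfalso; apply: h; exists q.
pose psi a k n := iota (enc (a, k, n, lv (b0 a))).
have dec_psi a k n : dec (psi a k n) = (a, k, n, lv (b0 a)) by rewrite dec_enc.
have psiinj a k n a' k' n' : psi a k n = psi a' k' n' -> [/\ a = a', k = k' & n = n'].
  by move=> /iinj /encinj [-> -> -> _].
pose Pk k c := exists a n, c = psi a k n.
pose Pall c := exists k, Pk k c.
pose beta c := b0 (dec c).1.1.1.
have beta_psi a k n : beta (psi a k n) = b0 a by rewrite /beta dec_psi.
have hex_tau : forall c, Pall c -> exists t, t != 0 /\ U (dec c).1.2 (t *: c).
  by move=> c _; apply: small_mult.
have [tau htau] := choice_fun (fun c t => t != 0 /\ U (dec c).1.2 (t *: c)) 1.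
have tau_psi a k n : tau (psi a k n) != 0 /\ U n (tau (psi a k n) *: psi a k n).
  have := htau (psi a k n) (hex_tau _ (ex_intro _ k (ex_intro _ a (ex_intro _ n erefl)))).
  by rewrite dec_psi.
pose u := uvec beta tau.
have PallB : Pall `<=` B by move=> c [k [a [n ->]]]; apply: iB.
have PallB0 : forall c, Pall c -> ~ B0 c by move=> c [k [a [n ->]]]; apply: iB0.
have Pbeta : forall c, Pall c -> B (beta c).
  by move=> c [k [a [n ->]]]; rewrite beta_psi; apply: b0B.
have Plv : forall c, Pall c -> (lv (beta c) < lv c)%N.
  by move=> c [k [a [n ->]]]; rewrite beta_psi lv_enc.
have Ptau : forall c, Pall c -> tau c != 0.
  by move=> c [k [a [n ->]]]; case: (tau_psi a k n).
have mast := master Bind PallB B0B PallB0 Pbeta Plv Ptau.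
have mastc := master_comb Bind PallB B0B PallB0 Pbeta Plv Ptau.
have Wsub : lsubspace W by rewrite WBW; exact: lspan_lsub.
have PkP k : Pk k `<=` Pall by move=> c Pc; exists k.
pose Z k : set X := fun z => exists w s, [/\ W w, onS (Pk k) s & z = w + combF u s].
have Zsub k : lsubspace (Z k).
  split.
    exists 0, [::]; split => //; first exact: lsub0.
    by rewrite combF_nil addr0.
  move=> a z1 z2 [w1 [s1 [W1 o1 ->]]] [w2 [s2 [W2 o2 ->]]].
  exists (a *: w1 + w2), (sc a s1 ++ s2); split.
  - by case: Wsub => _; apply.
  - by apply: onS_cat => //; exact: onS_sc.
  - by rewrite combF_cat combF_sc scalerDr addrACA.
have WZ k : W `<=` Z k.
  by move=> w Ww; exists w, [::]; split => //; rewrite combF_nil addr0.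
have uZ k c : Pk k c -> Z k (u c).
  move=> Pc; exists 0, [:: (c, 1)]; split; first exact: lsub0.
    by move=> p; rewrite inE => /eqP ->.
  by rewrite combF1 add0r.
have uY c : Pall c -> Y (u c).
  move=> Pc; apply: lsubD => //; first by apply: BY; apply: Pbeta.
  by apply: lsubZ => //; apply: BY; apply: PallB.
have ZY k : Z k `<=` Y.
  move=> z [w [s [Ww os ->]]]; apply: lsubD => //; first exact: WY.
  rewrite combF_comb; apply: lsub_comb => // p /mapP [q qs ->] /=.
  by apply: uY; apply: (PkP k); apply: os.
have Zint k1 k2 : k1 <> k2 -> Z k1 `&` Z k2 = W.
  move=> k12; apply/seteqP; split; last first.
    by move=> w Ww; split; apply: WZ.
  move=> z [[w1 [s1 [W1 o1 ->]]] [w2 [s2 [W2 o2 e]]]].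
  have : lspan B0 (w1 - w2) by apply: WB0; apply: lsubB.
  move=> /lspan_comb [t [Bt et]].
  have e0 : comb t + combF u (s1 ++ sc (-1) s2) = 0.
    by rewrite -et combF_cat combF_sc scaleN1r addrACA -opprD e subrr.
  have o12 : onS Pall (s1 ++ sc (-1) s2).
    by apply: onS_cat; [exact: onS_sub o1 | apply: onS_sc; exact: onS_sub o2].
  have hcs := mast _ _ o12 Bt e0.
  suff -> : combF u s1 = 0 by rewrite addr0.
  rewrite combF_group big1_seq // => c /andP [_]; rewrite mem_undup => cin.
  have P1c : Pk k1 c by move: cin => /mapP [p ps ->]; apply: o1.
  have c2 : csum s2 c = 0.
    apply: csum_notin; apply/negP => /mapP [p ps pe].
    have := o2 _ ps; rewrite -pe => -[a' [n' ce2]].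
    move: P1c => [a [n ce1]]; rewrite ce1 in ce2.
    by have [_ /k12] := psiinj _ _ _ _ _ _ ce2.
  have := hcs c; rewrite csum_cat csum_sc c2 mulr0 addr0 => ->.
  by rewrite scale0r.
have Zdense k : dense (Z k).
  apply: (@dense_of_closure _ _ Y B (Z k) dY _ (Zsub k)); first by rewrite BYe.
  move=> b Bb; have [a _ <-] := b0surj b Bb.
  apply: (@closure_seq _ _ _ _ U (fun n => tau (psi a k n) *: psi a k n) Ub).
    by move=> n; case: (tau_psi a k n).
  move=> n; have := uZ k (psi a k n) (ex_intro _ a (ex_intro _ n erefl)).
  by rewrite /u /uvec beta_psi.
have uinj c c' : Pall c -> Pall c' -> u c = u c' -> c = c'.
  move=> Pc Pc' e.
  have e0 : comb [::] + combF u [:: (c, 1); (c', -1)] = 0.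
    by rewrite /comb /combF big_nil add0r big_cons big_seq1 /= e scale1r scaleN1r subrr.
  have o : onS Pall [:: (c, 1); (c', -1)].
    by move=> p; rewrite !inE => /orP [/eqP ->|/eqP ->].
  have := mast _ _ o (fun p (h : p \in [::]) => False_ind _ (notF h)) e0 c.
  rewrite /csum !big_cons big_nil /= eqxx.
  have [//|nc] := eqVneq c' c.
  by move=> /eqP; rewrite ?addr0 oner_eq0.
have Zdim k : has_dim (Z k) A.
  pose H := BW `|` (u @` Pk k).
  have [pre hpre] := choice_fun (fun h c => Pk k c /\ u c = h) 0.
  have preH h : (u @` Pk k) h -> Pk k (pre h) /\ u (pre h) = h.
    by move=> [c Pc <-]; apply: hpre; exists c.
  have HZ : H `<=` Z k.
    move=> h [BWh|[c Pc <-]]; last exact: uZ.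
    by apply: WZ; rewrite WBW; apply: lspan_in.
  have HZe : lspan H = Z k.
    apply/seteqP; split; first exact: lspan_sub (Zsub k) HZ.
    move=> z [w [s [Ww os ->]]].
    apply: lsubD; first exact: lspan_lsub.
      by move: Ww; rewrite WBW; apply: lspan_mono => x BWx; left.
    apply/lspan_comb; exists [seq (u p.1, p.2) | p <- s]; split.
      by move=> p /mapP [q qs ->]; right; exists q.1 => //; apply: os.
    by rewrite combF_comb.
  have Hind : lin_indep H.
    move=> n v c vinj Hv sum0 i.
    pose PB := fun j => `[< BW (v j) >].
    pose t := [seq (v j, c j) | j <- enum 'I_n & PB j].
    pose s := [seq (pre (v j), c j) | j <- enum 'I_n & ~~ PB j].
    have nPBu j : ~~ PB j -> (u @` Pk k) (v j).
      move=> /asboolPn nB; by case: (Hv j).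
    have es : combF u s = \sum_(j | ~~ PB j) c j *: v j.
      rewrite combF_mf; apply: eq_bigr => j nj.
      by rewrite (preH _ (nPBu j nj)).2.
    have et : comb t = \sum_(j | PB j) c j *: v j by rewrite comb_mf.
    have ot : onS BW t by move=> p /mapP [j]; rewrite mem_filter => /andP [/asboolP h _] ->.
    have os : onS Pall s.
      move=> p /mapP [j]; rewrite mem_filter => /andP [nj _] -> /=.
      by apply: (PkP k); apply: (preH _ (nPBu j nj)).1.
    have e1 : comb t + combF u s = 0 by rewrite et es; move: sum0; rewrite (bigID PB).
    have : lspan B0 (comb t).
      apply: WB0; rewrite WBW; apply/lspan_comb; by exists t.
    move=> /lspan_comb [t0 [ot0 et0]].
    rewrite et0 in e1.
    have [_ ct0] := mastc _ _ os ot0 e1.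
    have [PBi|nPBi] := boolP (PB i).
      have := indep_csum hBW ot (etrans et0 ct0) (v i).
      rewrite csum_mf (eq_bigl (fun j => j == i)) ?big_pred1_eq // => j.
      apply/andP/eqP => [[_ /eqP /vinj]//|->]; by rewrite PBi eqxx.
    have := mast _ _ os ot0 e1 (pre (v i)).
    rewrite /s csum_mf (eq_bigl (fun j => j == i)) ?big_pred1_eq // => j.
    apply/andP/eqP => [[nj /eqP e]|->]; last by rewrite nPBi eqxx.
    apply: vinj; rewrite -(preH _ (nPBu j nj)).2 -(preH _ (nPBu i nPBi)).2.
    by rewrite e.
  have [e he] : exists e : X -> A, forall x y, BW x -> BW y -> e x = e y -> x = y.
    move/cleP: BWA => [BW0|[f [_ finj]]]; last by exists f.
    by exists (fun _ => a0) => x y; rewrite BW0.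
  have HA : (H #<= [set: A])%card.
    pose F h := if pselect (BW h) then rho (e h, nu 0%N)
                else rho ((dec (pre h)).1.1.1, nu (dec (pre h)).1.2.+1).
    apply: (@cle_fun _ _ _ _ F); split => // h h' Hh Hh'.
    rewrite /F; case: pselect => bh; case: pselect => bh' /rinj [].
    - by move=> /he; apply.
    - by move=> _ /nuinj.
    - by move=> _ /nuinj.
    - move: Hh Hh' => [//|uh] [//|uh'].
      have [[a [n pe]] ue] := preH _ uh; have [[a' [n' pe']] ue'] := preH _ uh'.
      rewrite pe pe' !dec_psi /= => ea /nuinj /succn_inj en.
      by rewrite -ue -ue' pe pe' ea en.
  have AH : ([set: A] #<= H)%card.
    apply: (@cle_fun _ _ _ _ (fun a => u (psi a k 0%N))); split.
      by move=> a _; right; exists (psi a k 0%N) => //; exists a, 0%N.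
    move=> a a' _ _ /uinj e'.
    by have [] := psiinj _ _ _ _ _ _ (e' (ex_intro _ k (ex_intro _ a (ex_intro _ 0%N erefl)))
                                    (ex_intro _ k (ex_intro _ a' (ex_intro _ 0%N erefl)))).
  split; first exact: Zsub.
  exists H; split; last exact: Cantor_Bernstein.
  by split; [exact: HZ|split].
exists Z; split; last exact: Zint.
by move=> k; split; [exact: Zdim|exact: Zdense|exact: WZ|exact: ZY].
Qed.

End Core.



Section Main.
Variables (K : numFieldType) (X : topologicalLmodType K).

Lemma lspan0 : lspan (@set0 X) = [set 0].
Proof.
apply/seteqP; split; last by move=> x ->; apply: lsub0; exact: lspan_lsub.
apply: lspan_sub => //; split => // a x y -> ->; by rewrite scaler0 addr0.
Qed.

Lemma indep0 : lin_indep (@set0 X).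
Proof. by move=> n v c _ Hv _ i; case: (Hv i). Qed.

Lemma indep1 (x : X) : lin_indep [set y | y = x /\ x != 0].
Proof.
move=> n v c vinj Hv s0 i.
have [vi nx] := Hv i.
have all_i j : j = i by apply: vinj; have [-> _] := Hv j; rewrite vi.
move: s0; rewrite (eq_bigl (fun j => j == i)); last by move=> j; rewrite (all_i j) eqxx.
rewrite big_pred1_eq vi => /eqP; rewrite scaler_eq0 => /orP [/eqP //|x0].
by rewrite x0 in nx.
Qed.

End Main.

Theorem corollary_gen (K : numFieldType) : corollary_for K.
Proof.
move=> X M A infd fc Ainf.
have [U [U0 Ub]] := fc 0.
have [nu nuinj] := nat_fun Ainf.
pose a0 := nu 0%N.
have nA0 : ~ ([set: A] #<= @set0 X)%card.
  by move=> /card_le0P /(congr1 (fun P => P a0)); rewrite propeqE => -[h _]; apply: h.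
split; [|split].
- split; last by move=> [Y [hY _]]; exists (Y a0).
  move=> [Y [[hY [B [hB BA]]] [dY YM]]].
  have [Z [hZ hZi]] := core Ainf U0 Ub hY hB BA dY (@indep0 _ X) erefl (card_ge0 _ _)
    (lspan_sub hY (sub0set Y)) (sub0set B) (fun x h => h) nA0.
  exists Z; split; last by move=> k1 k2 /hZi ->; exact: lspan0.
  move=> k; have [hd dZ _ ZY] := hZ k; split => //; split => //.
  by move=> z /ZY /YM.
- split; last first.
    move=> h x Mx; have [Y [hY _]] := h x Mx; exists (Y a0); exact: hY.
  move=> h x Mx.
  have [Y [[[hY [B [[BY [Bind BYe]] BA]]] [dY YM]] Yx]] := h x Mx.
  have : lspan B x by rewrite BYe.
  move=> /lspan_comb [s [Bs xs]].
  pose BW := [set y : X | y = x /\ x != 0].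
  pose B0 := [set c : X | c \in map fst s].
  have xW : lspan BW x.
    have [->|nx] := eqVneq x 0; first by apply: lsub0; exact: lspan_lsub.
    by apply: lspan_in.
  have Wx : lspan BW = lspan [set x].
    apply/seteqP; split; first by apply: lspan_mono => y [-> _].
    by apply: lspan_sub; [exact: lspan_lsub | move=> y ->].
  have BWA : (BW #<= [set: A])%card.
    apply: (@cle_fun _ _ _ _ (fun _ => a0)); split => // y y' [-> _] [-> _] _; by [].
  have WY : lspan BW `<=` Y.
    by apply: lspan_sub => // y [-> _].
  have B0B : B0 `<=` B by move=> c /mapP [p ps ->]; apply: Bs.
  have WB0 : lspan BW `<=` lspan B0.
    apply: lspan_sub; first exact: lspan_lsub.
    move=> y [-> _]; apply/lspan_comb; exists s; split => //.
    by move=> p ps; apply: map_f.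
  have nAB0 : ~ ([set: A] #<= B0)%card.
    move=> hA; apply: Ainf; apply: card_le_finite hA _; exact: finite_seq.
  have [Z [hZ hZi]] := core Ainf U0 Ub hY (conj BY (conj Bind BYe)) BA dY (@indep1 _ X x)
    erefl BWA WY B0B WB0 nAB0.
  exists Z; split; last by move=> k1 k2 /hZi ->.
  move=> k; have [hd dZ WZ ZY] := hZ k; split; last exact: WZ.
  split => //; split => //; by move=> z /ZY /YM.
- move=> G hGA hnAG; split; last first.
    move=> [lin h]; split => // W hW WM.
    have [Y [hY _]] := h W hW WM; exists (Y a0); exact: hY.
  move=> [lin h]; split => // W hW WM.
  have [Y [[[hY [B [[BY [Bind BYe]] BA]]] [dY YM]] WY]] := h W hW WM.
  have [Wsub [BW [[BWW [BWind BWe]] BWG]]] := hW.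
  have BWG' : (BW #<= [set: G])%card by move/card_eqPle: BWG => [].
  have BWA : (BW #<= [set: A])%card by apply: card_le_trans hGA.
  have [rep hrep] := choice_fun (fun (w : X) s => onS B s /\ w = comb s) [::].
  have rep_ok w : BW w -> onS B (rep w) /\ w = comb (rep w).
    move=> BWw; apply: hrep; apply/lspan_comb; rewrite BYe; exact/WY/BWW.
  pose B0 := [set c : X | exists w, BW w /\ c \in map fst (rep w)].
  have B0B : B0 `<=` B.
    by move=> c [w [BWw /mapP [p ps ->]]]; apply: (rep_ok w BWw).1.
  have WB0 : W `<=` lspan B0.
    rewrite -BWe; apply: lspan_sub; first exact: lspan_lsub.
    move=> w BWw; apply/lspan_comb; exists (rep w); split; last exact: (rep_ok w BWw).2.
    by move=> p ps; exists w; split => //; apply: map_f.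
  have nAB0 : ~ ([set: A] #<= B0)%card.
    move=> hA.
    have [Gfin|Ginf] := pselect (finite_set [set: G]).
      apply: Ainf; apply: card_le_finite hA _.
      have -> : B0 = \bigcup_(w in BW) [set` map fst (rep w)].
        apply/seteqP; split; first by move=> c [w [BWw cw]]; exists w.
        by move=> c [w BWw cw]; exists w.
      apply: bigcup_finite => // ; exact: card_le_finite BWG' Gfin.
    apply: hnAG; apply: (card_le_trans hA).
    have [rhoG rGinj] := hess_fun Ginf.
    have [nuG nGinj] := nat_fun Ginf.
    have [e he] : exists e : X -> G, forall x y, BW x -> BW y -> e x = e y -> x = y.
      move/cleP: BWG' => [BW0|[f [_ finj]]]; last by exists f.
      by exists (fun _ => nuG 0%N) => x y; rewrite BW0.
    have [ws hws] := choice_fun (fun c w => BW w /\ c \in map fst (rep w)) 0.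
    apply: (@cle_fun _ _ _ _ (fun c => rhoG (e (ws c), nuG (index c (map fst (rep (ws c))))))).
    split => // c c' B0c B0c' /rGinj [] eq /nGinj.
    have [wc cin] := hws c B0c; have [wc' cin'] := hws c' B0c'.
    move: eq => /(he _ _ wc wc') eq; rewrite -eq in cin' * => ei.
    by rewrite -(nth_index 0 cin) -(nth_index 0 cin') ei.
  have [Z [hZ hZi]] := core Ainf U0 Ub hY (conj BY (conj Bind BYe)) BA dY BWind
    (esym BWe) BWA WY B0B WB0 nAB0.
  exists Z; split; last exact: hZi.
  move=> k; have [hd dZ WZ ZY] := hZ k; split; last exact: WZ.
  split => //; split => //; by move=> z /ZY /YM.
Qed.


Theorem corollary3p7 (R : realType) :
  corollary_for R /\ corollary_for (R[i])%C.
Proof. by split; apply: corollary_gen. Qed.
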